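(* Let $\iota:\emptyset\to\{\bullet\}$. A continuous map $f:X\to Y$ belongs to $\{\iota\}^{rllrr}$ (in $\mathrm{Top}$) if and only if there is a continuous section $s:Y\to X$ of $f$ such that for every $y\in Y$, $s(y)\in\bigcap\{U: U\subseteq X \text{ open},\ U\cap f^{-1}(y)\neq\emptyset\}$. In particular, each map in $\{\iota\}^{rllrr}$ has a section, is a quotient map, and each of its fibres has a generic point; and the maps $\sigma$, $e$, $M$ described below satisfy $\sigma,e,M\in\{\iota\}^{rllrr}\subseteq\{\iota\}^{rrrrl}$. Here $\sigma:S\to\{\bullet\}$ is the map from the Sierpinski space $S=\{o,c\}$ (open sets $\emptyset,\{o\},S$) to a point; $e:\{a,b\}\to\{\bullet\}$ is the map from the two-point antidiscrete space to a point; and $M:D\to E$ has $D=\{x,y,z,c\}$ with open sets $\emptyset,\{x,y,z\},D$, $E=\{u,v\}$ antidiscrete, $M(x)=M(y)=u$, $M(z)=M(c)=v$.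
   Context: For continuous maps $f:A\to B$, $g:C\to D'$, $f\pitchfork g$ means: for all continuous $t:A\to C$, $b:B\to D'$ with $g\circ t=b\circ f$ there is continuous $d:B\to C$ with $d\circ f=t$, $g\circ d=b$. For a class $P$, $P^l=\{f: f\pitchfork g\ \forall g\in P\}$, $P^r=\{g: f\pitchfork g\ \forall f\in P\}$; for a word $w$ in $l,r$, $P^w$ applies these operations from left to right (e.g. $P^{rllrr}=((((P^r)^l)^l)^r)^r$). A point of a space is generic if it lies in every non-empty open subset. *)

(* Defs.v *)
From HB Require Import structures.
From mathcomp Require Import all_boot all_order all_algebra.
From mathcomp Require Import all_classical topology.
Set Implicit Arguments.
Unset Strict Implicit.
Unset Printing Implicit Defensive.
Local Open Scope classical_set_scope.

Record Mor := mkMor {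
  mdom : topologicalType;
  mcod : topologicalType;
  mfun :> mdom -> mcod;
  mcont : continuous mfun }.

Definition orth (f g : Mor) : Prop :=
  forall (t : mdom f -> mdom g) (b : mcod f -> mcod g),
    continuous t -> continuous b -> (g : _ -> _) \o t = b \o f ->
    exists d : mcod f -> mdom g,
      continuous d /\ d \o (f : _ -> _) = t /\ (g : _ -> _) \o d = b.

Definition MorClass := Mor -> Prop.

Definition lorth (P : MorClass) : MorClass := fun f => forall g, P g -> orth f g.
Definition rorth (P : MorClass) : MorClass := fun g => forall f, P f -> orth f g.

Definition antidiscrete (T : choiceType) : Type := T.

Section Antidiscrete.
Variable T : choiceType.
Definition adisc_open (U : set T) : Prop := U = set0 \/ U = setT.
Lemma adisc_openT : adisc_open setT. Proof. by right. Qed.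
Lemma adisc_openI : setI_closed adisc_open.
Proof.
move=> A B [->|->] [->|->]; rewrite ?set0I ?setI0 ?setIT ?setTI;
  by [left|right].
Qed.
Lemma adisc_open_bigU (I : Type) (f : I -> set T) :
  (forall i, adisc_open (f i)) -> adisc_open (\bigcup_i f i).
Proof.
move=> fo; have [[i fiT]|] := pselect (exists i, f i = setT).
  by right; apply/seteqP; split=> // x _; exists i => //; rewrite fiT.
move=> nT; left; apply/seteqP; split=> // x [i _ fxi].
by case: (fo i) => fi; [rewrite fi in fxi|apply: nT; exists i].
Qed.
HB.instance Definition _ := Choice.on (antidiscrete T).
HB.instance Definition _ := @isOpenTopological.Build (antidiscrete T)
  adisc_open adisc_openT adisc_openI adisc_open_bigU.
End Antidiscrete.

Definition emptyS : topologicalType := antidiscrete void.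
Definition pointS : topologicalType := antidiscrete unit.

Definition iota_fun (x : emptyS) : pointS := tt.
Lemma iota_cont : continuous iota_fun. Proof. by case. Qed.
Definition iota : Mor := mkMor iota_cont.

Definition iotaClass : MorClass := fun f => f = iota.

Definition iota_rllrr : MorClass := rorth (rorth (lorth (lorth (rorth iotaClass)))).
Definition iota_rrrrl : MorClass := lorth (rorth (rorth (rorth (rorth iotaClass)))).

Definition sierpinski : Type := bool.
Definition sierp_o : sierpinski := true.
Definition sierp_c : sierpinski := false.
Definition sierp_open (U : set sierpinski) : Prop :=
  U = set0 \/ U = [set sierp_o] \/ U = setT.
Lemma sierp_openT : sierp_open setT. Proof. by right; right. Qed.
Lemma sierp_openI : setI_closed sierp_open.
Proof.
move=> A B [->|[->|->]] [->|[->|->]]; rewrite ?set0I ?setI0 ?setIT ?setTI ?setIid;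
  by [left|right;left|right;right].
Qed.
Lemma sierp_open_bigU (I : Type) (f : I -> set sierpinski) :
  (forall i, sierp_open (f i)) -> sierp_open (\bigcup_i f i).
Proof.
move=> fo; have [[i fiT]|nT] := pselect (exists i, f i = setT).
  by right; right; apply/seteqP; split=> // x _; exists i => //; rewrite fiT.
have [[i fio]|no] := pselect (exists i, f i = [set sierp_o]).
  right; left; apply/seteqP; split.
    move=> x [j _ fjx]; case: (fo j) => [fj|[fj|fj]]; rewrite fj in fjx => //.
    by exfalso; apply: nT; exists j.
  by move=> x ->; exists i => //; rewrite fio.
left; apply/seteqP; split=> // x [j _ fjx].
case: (fo j) => [fj|[fj|fj]]; first by rewrite fj in fjx.
  by exfalso; apply: no; exists j.
by exfalso; apply: nT; exists j.
Qed.
HB.instance Definition _ := Choice.on sierpinski.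
HB.instance Definition _ := @isOpenTopological.Build sierpinski
  sierp_open sierp_openT sierp_openI sierp_open_bigU.

Definition sigma_fun (x : sierpinski) : pointS := tt.
Lemma sigma_cont : continuous sigma_fun.
Proof.
apply/continuousP => A [->|->]; rewrite ?preimage_set0 ?preimage_setT;
  [exact: open0|exact: openT].
Qed.
Definition sigma : Mor := mkMor sigma_cont.

Definition twoAnti : topologicalType := antidiscrete bool.
Definition e_fun (x : twoAnti) : pointS := tt.
Lemma e_cont : continuous e_fun.
Proof.
apply/continuousP => A [->|->]; rewrite ?preimage_set0 ?preimage_setT;
  [exact: open0|exact: openT].
Qed.
Definition e : Mor := mkMor e_cont.

Inductive D4 := Dx | Dy | Dz | Dc.
Definition D4_to_nat (p : D4) : nat :=
  match p with Dx => 0 | Dy => 1 | Dz => 2 | Dc => 3 end.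
Definition nat_to_D4 (n : nat) : option D4 :=
  match n with 0 => Some Dx | 1 => Some Dy | 2 => Some Dz | 3 => Some Dc
  | _ => None end.
Lemma D4_pcan : pcancel D4_to_nat nat_to_D4. Proof. by case. Qed.
HB.instance Definition _ := Countable.copy D4 (pcan_type D4_pcan).

Definition Dspace : Type := D4.
Definition D_open (U : set Dspace) : Prop :=
  U = set0 \/ U = [set p | p <> Dc] \/ U = setT.
Lemma D_openT : D_open setT. Proof. by right; right. Qed.
Lemma D_openI : setI_closed D_open.
Proof.
move=> A B [->|[->|->]] [->|[->|->]]; rewrite ?set0I ?setI0 ?setIT ?setTI ?setIid;
  by [left|right;left|right;right].
Qed.
Lemma D_open_bigU (I : Type) (f : I -> set Dspace) :
  (forall i, D_open (f i)) -> D_open (\bigcup_i f i).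
Proof.
move=> fo; have [[i fiT]|nT] := pselect (exists i, f i = setT).
  by right; right; apply/seteqP; split=> // x _; exists i => //; rewrite fiT.
have [[i fio]|no] := pselect (exists i, f i = [set p | p <> Dc]).
  right; left; apply/seteqP; split.
    move=> x [j _ fjx]; case: (fo j) => [fj|[fj|fj]]; rewrite fj in fjx => //.
    by exfalso; apply: nT; exists j.
  by move=> x xc; exists i => //; rewrite fio.
left; apply/seteqP; split=> // x [j _ fjx].
case: (fo j) => [fj|[fj|fj]]; first by rewrite fj in fjx.
  by exfalso; apply: no; exists j.
by exfalso; apply: nT; exists j.
Qed.
HB.instance Definition _ := Choice.on Dspace.
HB.instance Definition _ := @isOpenTopological.Build Dspace
  D_open D_openT D_openI D_open_bigU.

Definition Espace : topologicalType := antidiscrete bool.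
Definition E_u : Espace := false.
Definition E_v : Espace := true.
Definition M_fun (p : Dspace) : Espace :=
  match p with Dx | Dy => E_u | Dz | Dc => E_v end.
Lemma M_cont : continuous M_fun.
Proof.
apply/continuousP => A [->|->]; rewrite ?preimage_set0 ?preimage_setT;
  [exact: open0|exact: openT].
Qed.
Definition M : Mor := mkMor M_cont.

Definition generic_section {X Y : topologicalType} (f : X -> Y) : Prop :=
  exists s : Y -> X, continuous s /\ (forall y, f (s y) = y) /\
    forall y (U : set X), open U -> U `&` f @^-1` [set y] !=set0 -> U (s y).

Definition has_section {X Y : topologicalType} (f : X -> Y) : Prop :=
  exists s : Y -> X, continuous s /\ forall y, f (s y) = y.

Definition quotient_map {X Y : topologicalType} (f : X -> Y) : Prop :=
  (forall y, exists x, f x = y) /\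
  forall V : set Y, open V <-> open (f @^-1` V).

(** a point p of the subspace A of X is generic in A if it lies in every
    non-empty open subset of A, i.e. in every open U of X meeting A *)
Definition generic_point_of {X : topologicalType} (A : set X) (p : X) : Prop :=
  A p /\ forall U : set X, open U -> U `&` A !=set0 -> U p.

Definition fibres_have_generic_point {X Y : topologicalType} (f : X -> Y) : Prop :=
  forall y, exists p, generic_point_of (f @^-1` [set y]) p.

(* Main.v *)
Require Import Defs.
From HB Require Import structures.
From mathcomp Require Import all_boot all_order all_algebra.
From mathcomp Require Import all_classical topology.
Local Open Scope classical_set_scope.
Set Implicit Arguments.
Unset Strict Implicit.
Unset Printing Implicit Defensive.

Lemma open_local (T : topologicalType) (A : set T) :
  (forall p, A p -> exists V, [/\ open V, V p & V `<=` A]) -> open A.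
Proof.
move=> H.
have -> : A = \bigcup_(V in [set V | open V /\ V `<=` A]) V.
  apply/seteqP; split => [p /H [V [oV Vp VA]]|p [V [_ VA] Vp]].
    by exists V.
  exact: VA.
by apply: bigcup_open => V [].
Qed.

Lemma open_const (T : topologicalType) (P : Prop) : open [set _ : T | P].
Proof.
case: (pselect P) => HP.
  have -> : [set _ : T | P] = setT by apply/seteqP; split.
  exact: openT.
have -> : [set _ : T | P] = set0 by apply/seteqP; split.
exact: open0.
Qed.

Lemma cstc (T U : topologicalType) (x : U) : continuous (fun _ : T => x).
Proof. exact: cst_continuous. Qed.

Lemma idc (T : topologicalType) : continuous (@id T).
Proof. by apply/continuousP => V oV. Qed.

(* sum with discrete second summand *)
Section SumL.
Variables (A : topologicalType) (B : choiceType).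
Definition SumL : Type := (A + B)%type.
HB.instance Definition _ := Choice.on SumL.
Definition sl_open (V : set SumL) : Prop := open (@inl A B @^-1` V).
Lemma sl_openT : sl_open setT. Proof. exact: openT. Qed.
Lemma sl_openI : setI_closed sl_open.
Proof. by move=> U V oU oV; exact: openI. Qed.
Lemma sl_open_bigU (I : Type) (F : I -> set SumL) :
  (forall i, sl_open (F i)) -> sl_open (\bigcup_i F i).
Proof.
move=> H; rewrite /sl_open.
have -> : (@inl A B @^-1` \bigcup_i F i) = \bigcup_i (@inl A B @^-1` F i).
  by apply/seteqP; split => x [i _ Hi]; exists i.
by apply: bigcup_open => i _; exact: H.
Qed.
HB.instance Definition _ := @isOpenTopological.Build SumL
  sl_open sl_openT sl_openI sl_open_bigU.
Lemma inl_SumL_cont : continuous (@inl A B : A -> SumL).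
Proof. by apply/continuousP => V oV. Qed.
Lemma SumL_openE (V : set SumL) : open (@inl A B @^-1` V) -> open V.
Proof. by []. Qed.
End SumL.

Notation L0 := (rorth iotaClass).
Notation L1 := (lorth L0).
Notation L2 := (lorth L1).
Notation L3 := (rorth L2).

Lemma L0_surj (g : Mor) : L0 g -> forall y : mcod g, exists x, g x = y.
Proof.
move=> H y.
have [] := H Defs.iota erefl (fun v : emptyS => match v with end) (fun _ => y).
- by case.
- exact: cst_continuous.
- by apply: funext; case.
move=> d [_ [_ e]]; exists (d tt).
by have := congr1 (fun F => F tt) e.
Qed.

Lemma L0_intro (g : Mor) (sec : mcod g -> mdom g) :
  (forall y, g (sec y) = y) -> L0 g.
Proof.
move=> H f -> t b ct cb e.
exists (fun _ => sec (b tt)); split; first exact: cst_continuous.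
split; first by apply: funext; case.
by apply: funext => -[] /=; rewrite H.
Qed.

Definition h0 : Mor := mkMor (@inl_SumL_cont pointS unit).

Lemma SumL_pt_disc (V : set (SumL pointS unit)) : open V.
Proof.
rewrite /open /= /sl_open.
case: (pselect (V (inl tt))) => HV; [right|left];
  apply/seteqP; split => // -[] //.
Qed.

Lemma h0_L1 : L1 h0.
Proof.
move=> G HG t b ct cb e.
pose sec y := projT1 (cid (L0_surj HG y)).
have Hsec y : G (sec y) = y := projT2 (cid (L0_surj HG y)).
exists (fun z : SumL pointS unit => match z with inl _ => t tt | inr _ => sec (b (inr tt)) end).
split.
  apply/continuousP => V oV; exact: SumL_pt_disc.
split; first by apply: funext => -[].
apply: funext => -[[]|[]] /=; last exact: Hsec.
by have := congr1 (fun F => F tt) e.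
Qed.
Definition clopen_dense (f' : Mor) : Prop :=
  forall W : set (mcod f'), open W -> open (~` W) -> (forall a, W (f' a)) -> forall p, W p.

Lemma L2_clopen_dense (f' : Mor) : L2 f' -> clopen_dense f'.
Proof.
move=> H W oW oCW HW p.
pose b (q : mcod f') : SumL pointS unit :=
  if pselect (W q) then inl tt else inr tt.
have cb : continuous b.
  apply/continuousP => V oV; apply: open_local => q Vq.
  case: (pselect (W q)) => Wq.
    exists W; split => // q' Wq'; move: Vq; rewrite /b /preimage /=.
    by case: (pselect (W q)) => // Wq0; case: (pselect (W q')).
  exists (~` W); split => // q' Wq'; move: Vq; rewrite /b /preimage /=.
  by case: (pselect (W q)) => // Wq0; case: (pselect (W q')).
have [] := H h0 h0_L1 (fun _ => tt) b (@cstc _ pointS tt) cb.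
  apply: funext => a /=; rewrite /b; case: pselect => // Hn; exfalso; exact: Hn (HW a).
move=> d [_ [_ e]].
have := congr1 (fun F => F p) e; rewrite /b /=.
by case: pselect.
Qed.

Lemma clopen_dense_L2 (f' : Mor) : clopen_dense f' -> L2 f'.
Proof.
move=> Hcd h Hh t b ct cb e.
pose G (z : SumL (mdom h) (mcod h)) : mcod h :=
  match z with inl x => h x | inr q => q end.
have cG : continuous G.
  apply/continuousP => V oV; exact ((continuousP _).1 (@mcont h) V oV).
pose GM := mkMor cG.
have HGM : L0 GM by apply: (@L0_intro GM inr).
have [] := Hh GM HGM inl id (@inl_SumL_cont _ _) (@idc _).
  by apply: funext.
move=> r [cr [rh Gr]].
have rbcont : continuous (r \o b).
  apply/continuousP => V oV.
  exact: (continuousP _).1 cb _ ((continuousP _).1 cr V oV).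
pose W := [set p | exists a, r (b p) = inl a].
have HW : forall p, W p.
  apply: Hcd.
  - have -> : W = (r \o b) @^-1` [set z | exists a, z = inl a].
      by apply/seteqP; split => p [a Ha]; exists a.
    apply: ((continuousP (r \o b)).1 rbcont); apply: SumL_openE.
    have -> : (@inl _ _ @^-1` [set z : SumL (mdom h) (mcod h) | exists a, z = inl a]) = setT.
      by apply/seteqP; split => // x _; exists x.
    exact: openT.
  - have -> : ~` W = (r \o b) @^-1` [set z | exists q, z = inr q].
      apply/seteqP; split => p Hp.
        case E: (r (b p)) => [a|q]; last by exists q.
        by exfalso; apply: Hp; exists a.
      move: Hp => [q E] [a E']; rewrite /= E' in E; discriminate.
    apply: ((continuousP (r \o b)).1 rbcont); apply: SumL_openE.
    have -> : (@inl _ _ @^-1` [set z : SumL (mdom h) (mcod h) | exists q, z = inr q]) = set0.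
      by apply/seteqP; split => // x [].
    exact: open0.
  - move=> a; exists (t a).
    have := congr1 (fun F => F a) e => /= <-.
    by have := congr1 (fun F => F (t a)) rh.
pose d p := projT1 (cid (HW p)).
have Hd p : r (b p) = inl (d p) := projT2 (cid (HW p)).
exists d; split.
  apply/continuousP => U oU.
  have -> : d @^-1` U = (r \o b) @^-1` [set z | exists2 x, U x & z = inl x].
    apply/seteqP; split => p /=.
      by move=> Up; exists (d p); rewrite ?Hd.
    by rewrite Hd => -[x Ux [->]].
  apply: ((continuousP (r \o b)).1 rbcont); apply: SumL_openE.
  have -> : (@inl _ _ @^-1` [set z : SumL (mdom h) (mcod h) | exists2 x, U x & z = inl x]) = U.
    by apply/seteqP; split => x /=; [case=> y Uy [->]|exists x].
  exact: oU.
split.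
  apply: funext => a /=.
  have := Hd (f' a); have := congr1 (fun F => F a) e => /= <-.
  by have := congr1 (fun F => F (t a)) rh => /= -> [].
apply: funext => p /=.
have := congr1 (fun F => F (b p)) Gr => /=.
by rewrite Hd.
Qed.
Section Closure.
Variable g : Mor.
Definition clg : set (mcod g) :=
  [set p | forall V, open V -> V p -> exists c, V (g c)].
Definition Zc : Type := {classic {p : mcod g | clg p}}.
Definition Zval (z : Zc) : mcod g := proj1_sig z.
Definition Ztop := initial_topology Zval.
Lemma clg_g c : clg (g c).
Proof. rewrite /clg /= => V oV Vc. by exists c. Qed.
Definition fZ (c : mdom g) : Ztop := exist _ (g c) (@clg_g c).
Lemma fZ_cont : continuous fZ.
Proof.
apply/continuousP => V [A oA <-].
exact ((continuousP _).1 (@mcont g) A oA).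
Qed.
Definition fZM : Mor := mkMor fZ_cont.
Lemma fZ_cd : clopen_dense fZM.
Proof.
move=> W oW [A oA eA] HW z.
apply: contrapT => nWz.
have Az : A (Zval z) by have := congr1 (fun S => S z) eA => /= ->.
have [c Ac] := projT2 z A oA Az.
have : (~` W) (fZ c) by rewrite -eA.
by apply; apply: HW.
Qed.
Lemma Zval_cont : continuous (Zval : Ztop -> mcod g).
Proof. exact: initial_continuous. Qed.
Lemma clg_openC : open (~` clg).
Proof.
apply: open_local => q nq.
have [V [oV Vq nV]] : exists V, [/\ open V, V q & forall c, ~ V (g c)].
  apply: contrapT => H; apply: nq => V oV Vq; apply: contrapT => H2.
  apply: H; exists V; split => // c Vc; apply: H2; by exists c.
exists V; split => // q' Vq' cq'.
by have [c Vc] := cq' V oV Vq'; apply: (nV c).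
Qed.
End Closure.

Lemma L3_lift (g : Mor) (X Y : topologicalType) (f : X -> Y) (hf : continuous f) :
  L3 g -> generic_section f -> orth g (mkMor hf).
Proof.
move=> Hg [s [cs [fs gs]]] t b ct cb e.
have [] := Hg (fZM g) (clopen_dense_L2 (@fZ_cd g)) id (@Zval g) (@idc _) (@Zval_cont g).
  by apply: funext.
move=> r [cr [rf gr]].
have rfc c : r (fZ c) = c by have := congr1 (fun F => F c) rf.
have grz z : g (r z) = Zval z by have := congr1 (fun F => F z) gr.
pose d (p : mcod g) : X :=
  match pselect (clg p) with
  | left hp => t (r (exist _ p hp : Ztop g))
  | right _ => s (b p) end.
have sbc : continuous (s \o b).
  apply/continuousP => V oV.
  exact: ((continuousP b).1 cb _ ((continuousP s).1 cs V oV)).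
have trc : continuous (t \o r).
  apply/continuousP => V oV.
  exact: ((continuousP r).1 cr _ ((continuousP t).1 ct V oV)).
exists d; split.
  apply/continuousP => U oU; apply: open_local => p.
  rewrite /preimage /d /=.
  case: (pselect (clg p)) => [hp|np] Up.
  - have fx : f (t (r (exist _ p hp : Ztop g))) = b p.
      have := congr1 (fun F => F (r (exist _ p hp : Ztop g))) e => /= ->.
      by rewrite grz.
    have Usbp : U (s (b p)).
      apply: gs => //; exists (t (r (exist _ p hp : Ztop g))); split => //.
    have := (continuousP _).1 trc U oU => -[A oA eA].
    exists ((s \o b) @^-1` U `&` A); split.
    + apply: openI => //; exact: ((continuousP _).1 sbc U oU).
    + split => //.
      by have := congr1 (fun S => S (exist _ p hp : Ztop g)) eA => /= ->.
    + move=> q [Uq Aq] /=.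
      case: (pselect (clg q)) => [hq|nq] //.
      by have := congr1 (fun S => S (exist _ q hq : Ztop g)) eA => /= <-.
  - exists (~` @clg g `&` (s \o b) @^-1` U); split.
    + apply: openI; first exact: clg_openC.
      exact: ((continuousP _).1 sbc U oU).
    + by split.
    + move=> q [nq Uq] /=.
      by case: (pselect (clg q)).
split.
  apply: funext => c /=; rewrite /d.
  case: (pselect (clg (g c))) => [hp|np]; last by exfalso; apply: np; exact: (@clg_g g c).
  have -> : (exist _ (g c) hp : Ztop g) = fZ c.
    by rewrite /fZ; congr exist; exact: Prop_irrelevance.
  by rewrite rfc.
apply: funext => p /=; rewrite /d.
case: (pselect (clg p)) => [hp|np]; last by rewrite fs.
have := congr1 (fun F => F (r (exist _ p hp : Ztop g))) e => /= ->.
by rewrite grz.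
Qed.

Lemma gen_L4 (X Y : topologicalType) (f : X -> Y) (hf : continuous f) :
  generic_section f -> iota_rllrr (mkMor hf).
Proof. by move=> Hs g Hg; apply: L3_lift. Qed.
Section Big.
Variables (X Y : topologicalType) (f : X -> Y).
Definition Sig : Type := ((X * set X) + bool)%type.
Definition Ix : Type := set (seq Sig).
Definition small (B : set Ix) : Prop :=
  exists h : Ix -> seq Sig, forall i j, B i -> B j -> h i = h j -> i = j.
Definition FF (A : set Ix) : Prop := small (~` A).

Lemma FF_T : FF setT.
Proof. by exists (fun _ => [::]) => i j []. Qed.

Lemma FF_S (A B : set Ix) : A `<=` B -> FF A -> FF B.
Proof.
move=> AB [h Hh]; exists h => i j Bi Bj; apply: Hh.
- by move=> /AB.
- by move=> /AB.
Qed.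

Lemma FF_I (A B : set Ix) : FF A -> FF B -> FF (A `&` B).
Proof.
move=> [hA HA] [hB HB].
exists (fun i => if pselect (A i) then inr false :: hB i else inr true :: hA i).
move=> i j Ni Nj.
case: (pselect (A i)) => Ai; case: (pselect (A j)) => Aj //= [] E.
- apply: HB => //.
  + by move=> Bi; apply: Ni.
  + by move=> Bj; apply: Nj.
- by apply: HA.
Qed.

Lemma cantor (h : Ix -> seq Sig) : ~ (forall i j, h i = h j -> i = j).
Proof.
move=> hinj.
pose D : Ix := [set l | exists A, h A = l /\ ~ A l].
case: (pselect (D (h D))) => [HD|nD].
  have [A [eA nA]] := HD.
  have AD : A = D := hinj _ _ eA.
  by apply: nA; rewrite AD.
by apply: (nD); exists D.
Qed.

Lemma FF_big (A : X * set X -> set Ix) :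
  (forall k, FF (A k)) -> exists i, forall k, A k i.
Proof.
move=> HA; apply: contrapT => Hn.
have Hk : forall i, exists k, ~ A k i.
  move=> i; apply: contrapT => H; apply: Hn; exists i => k.
  apply: contrapT => H'; apply: H; by exists k.
pose kk i := projT1 (cid (Hk i)).
have Hkk i : ~ A (kk i) i := projT2 (cid (Hk i)).
pose hh k := projT1 (cid (HA k)).
have Hhh k : forall i j, ~ A k i -> ~ A k j -> hh k i = hh k j -> i = j :=
  projT2 (cid (HA k)).
apply: (@cantor (fun i => inl (kk i) :: hh (kk i) i)) => i j /= [] E1 E2.
apply: (Hhh (kk j)).
- rewrite -E1; exact: Hkk.
- exact: Hkk.
- by rewrite -[in X in X = _]E1.
Qed.

Definition Dcar : Type := (X + (Ix * Y))%type.
HB.instance Definition _ := gen_eqMixin Dcar.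
HB.instance Definition _ := gen_choiceMixin Dcar.

Definition Dopen (V : set Dcar) : Prop :=
  [/\ open (@inl X (Ix * Y) @^-1` V),
      forall i, open [set y | V (inr (i, y))] &
      forall x, V (inl x) -> FF [set i | V (inr (i, f x))]].

Lemma Dopen_T : Dopen setT.
Proof. split => //; [exact: openT|move=> i; exact: openT|move=> x _; exact: FF_T]. Qed.

Lemma Dopen_I : setI_closed Dopen.
Proof.
move=> U V [U1 U2 U3] [V1 V2 V3]; split.
- exact: openI.
- by move=> i; apply: openI; [exact: U2|exact: V2].
- by move=> x [Ux Vx]; apply: FF_I; [apply: U3|apply: V3].
Qed.

Lemma Dopen_bigU (J : Type) (F : J -> set Dcar) :
  (forall j, Dopen (F j)) -> Dopen (\bigcup_j F j).
Proof.
move=> H; split.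
- have -> : (@inl X (Ix * Y) @^-1` \bigcup_j F j) = \bigcup_j (@inl X (Ix * Y) @^-1` F j).
    by apply/seteqP; split => x [j _ Hj]; exists j.
  by apply: bigcup_open => j _; have [] := H j.
- move=> i.
  have -> : [set y | (\bigcup_j F j) (inr (i, y))] = \bigcup_j [set y | F j (inr (i, y))].
    by apply/seteqP; split => x [j _ Hj]; exists j.
  by apply: bigcup_open => j _; have [] := H j.
- move=> x [j _ Fj]; have [_ _ H3] := H j.
  apply: FF_S (H3 x Fj) => i Fi; by exists j.
Qed.

HB.instance Definition _ := @isOpenTopological.Build Dcar
  Dopen Dopen_T Dopen_I Dopen_bigU.

Definition gD (x : X) : Dcar := inl x.
Lemma gD_cont : continuous gD.
Proof. by apply/continuousP => V [V1 _ _]. Qed.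

Lemma Dcar_openE (V : set Dcar) : open V -> Dopen V.
Proof. by []. Qed.
Lemma Dcar_openI (V : set Dcar) : Dopen V -> open V.
Proof. by []. Qed.

Lemma gD_L3 : L3 (mkMor gD_cont).
Proof.
move=> f' Hf' t b ct cb e.
have Hcd := L2_clopen_dense Hf'.
have Hb : forall p, exists x, b p = inl x.
  move=> p.
  case E: (b p) => [x|[i y]]; first by exists x.
  pose A : set Ix := ~` [set i].
  have FA : FF A.
    exists (fun _ => [::]) => j k /= Aj Ak _.
    by rewrite (contrapT Aj) (contrapT Ak).
  pose WA : set Dcar := [set z | match z with inl _ => True | inr (j, _) => A j end].
  have oWA : open WA.
    apply: Dcar_openI; split.
    - exact (@open_const X True).
    - by move=> j; exact (@open_const Y (A j)).
    - by move=> x _.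
  have oCWA : open (~` WA).
    apply: Dcar_openI; split.
    - exact (@open_const X (~ True)).
    - by move=> j; exact (@open_const Y (~ A j)).
    - by move=> x [].
  have := Hcd (b @^-1` WA) ((continuousP b).1 cb _ oWA)
    ((continuousP b).1 cb _ oCWA).
  have Hfa : forall a, (b @^-1` WA) (f' a).
    move=> a; rewrite /preimage /=.
    by have := congr1 (fun F => F a) e => /= <-.
  move=> /(_ Hfa p); rewrite /preimage /= E /WA /A /=.
  by move=> /(_ erefl).
pose d p := projT1 (cid (Hb p)).
have Hd p : b p = inl (d p) := projT2 (cid (Hb p)).
exists d; split.
  apply/continuousP => U oU.
  pose VU : set Dcar := [set z | match z with inl x => U x | inr _ => True end].
  have oVU : open VU.
    apply: Dcar_openI; split => //.
    - by move=> j; exact (@open_const Y True).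
    - by move=> x _; exact: FF_T.
  have -> : d @^-1` U = b @^-1` VU.
    by apply/seteqP; split => p; rewrite /preimage /= Hd.
  exact: ((continuousP b).1 cb _ oVU).
split.
  apply: funext => a /=.
  have := Hd (f' a); have := congr1 (fun F => F a) e => /= <-.
  by case.
by apply: funext => p /=; rewrite Hd.
Qed.

Lemma bD_cont (hf : continuous f) :
  continuous (fun z : Dcar => match z with inl x => f x | inr (_, y) => y end).
Proof.
apply/continuousP => W oW; apply: Dcar_openI; split.
- exact: ((continuousP f).1 hf W oW).
- by move=> i.
- move=> x Wx; apply: FF_S FF_T => i _ //.
Qed.

Lemma L4_generic (hf : continuous f) : iota_rllrr (mkMor hf) -> generic_section f.
Proof.
move=> H.
have [] := H (mkMor gD_cont) gD_L3 id _ (@idc _) (bD_cont hf).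
  by apply: funext.
move=> d [cd [e1 e2]].
have de1 x : d (inl x) = x by have := congr1 (fun F => F x) e1.
have de2 z : f (d z) = match z with inl x => f x | inr (_, y) => y end.
  by have := congr1 (fun F => F z) e2.
pose A (k : X * set X) : set Ix :=
  [set i | open k.2 -> k.2 k.1 -> k.2 (d (inr (i, f k.1)))].
have FA : forall k, FF (A k).
  move=> [x U].
  case: (pselect (open U /\ U x)) => [[oU Ux]|n].
    have := Dcar_openE ((continuousP d).1 cd U oU) => -[_ _ H3].
    apply: FF_S (H3 x _); last by rewrite /preimage /= de1.
    by move=> i Hi _ _.
  apply: FF_S FF_T => i _ /= oU Ux; exfalso; exact: n.
have [i0 Hi0] := FF_big FA.
exists (fun y => d (inr (i0, y))); split.
  apply/continuousP => U oU.
  have [_ H2 _] := Dcar_openE ((continuousP d).1 cd U oU); exact: (H2 i0).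
split.
  by move=> y; rewrite de2.
move=> y U oU [x [Ux /= fx]].
by have := Hi0 (x, U) oU Ux; rewrite /= fx.
Qed.
End Big.
Lemma sigma_Er : rorth (rorth (rorth iotaClass)) sigma.
Proof.
move=> h Hh t b ct cb e.
pose W := initial_topology (h : mdom h -> mcod h).
have cG : continuous (id : mdom h -> W).
  apply/continuousP => V [A oA <-].
  exact ((continuousP _).1 (@mcont h) A oA).
pose GM := mkMor cG.
have HGM : L0 GM by apply: (@L0_intro GM id).
have [] := Hh GM HGM id (h : W -> mcod h) (@idc _) (@initial_continuous _ _ _).
  by apply: funext.
move=> d' [cd' [d'G _]].
have d'id x : d' x = x by have := congr1 (fun F => F x) d'G.
pose O := t @^-1` [set sierp_o].
have oO : open O.
  apply: ((continuousP t).1 ct); by right; left.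
have [A oA eA] : (open (O : set W)).
  have -> : (O : set W) = d' @^-1` O.
    by apply/seteqP; split => x; rewrite /preimage /= d'id.
  exact: ((continuousP d').1 cd' _ oO).
pose d (q : mcod h) : sierpinski := if pselect (A q) then true else false.
exists d; split.
  apply/continuousP => V [->|[->|->]].
  - exact: open0.
  - have -> : d @^-1` [set sierp_o] = A.
      apply/seteqP; split => q; rewrite /preimage /= /d;
        by case: (pselect (A q)).
    exact: oA.
  - exact: openT.
split; last by apply: funext => q; case: (b q).
apply: funext => p /=; rewrite /d.
have := congr1 (fun S => S p) eA; rewrite /preimage /O /= => eAp.
case: (pselect (A (h p))) => Ap.
  by move: Ap; rewrite eAp.
by case E: (t p) => //; exfalso; apply: Ap; rewrite eAp E.
Qed.

Lemma L4_rrrrl (g : Mor) : iota_rllrr g -> iota_rrrrl g.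
Proof.
case: g => X Y g hg Hg.
have [s [cs [gs gen]]] := L4_generic Hg.
move=> h Hh t b ct cb e.
have tsb x : t (s (g x)) = t x.
  pose t' (z : sierpinski) : mdom h := if z then t (s (g x)) else t x.
  have ct' : continuous t'.
    apply/continuousP => V oV.
    case: (pselect (V (t x))) => Vx.
      have Vs : V (t (s (g x))).
        have := gen (g x) (t @^-1` V) ((continuousP t).1 ct V oV).
        by apply; exists x.
      right; right; apply/seteqP; split => // -[] _ //.
    case: (pselect (V (t (s (g x))))) => Vs.
      right; left; apply/seteqP; split => -[] //.
    left; apply/seteqP; split => -[] //.
  have := Hh sigma sigma_Er t' (fun _ => h (t x)) ct' (@cstc _ _ _).
  case.
    apply: funext => -[] //=.
    have := congr1 (fun F => F (s (g x))) e => /= ->.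
    by rewrite gs; have := congr1 (fun F => F x) e => /= ->.
  move=> d [_ [dE _]].
  have E1 := congr1 (fun F => F true) dE.
  have E2 := congr1 (fun F => F false) dE.
  by move: E1 E2 => /= <- <-.
exists (t \o s); split.
  apply/continuousP => V oV.
  exact: ((continuousP s).1 cs _ ((continuousP t).1 ct V oV)).
split; first by apply: funext => x /=; rewrite tsb.
apply: funext => y /=.
have := congr1 (fun F => F (s y)) e => /= ->.
by rewrite gs.
Qed.

Lemma gen_sigma : generic_section sigma_fun.
Proof.
exists (fun _ => sierp_o); split; first exact: cstc.
split; first by case.
move=> y U oU [x [Ux _]].
by case: oU Ux => [->|[->|->]].
Qed.

Lemma gen_e : generic_section e_fun.
Proof.
exists (fun _ => true : twoAnti); split; first exact: cstc.
split; first by case.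
move=> y U oU [x [Ux _]].
by case: oU Ux => [->|->].
Qed.

Lemma gen_M : generic_section M_fun.
Proof.
exists (fun b : Espace => if b then Dz else Dx); split.
  apply/continuousP => V [->|[->|->]].
  - exact: open0.
  - right; apply/seteqP; split => // -[] _ //.
  - exact: openT.
split; first by case.
move=> y U oU [x [Ux _]].
by case: oU Ux => [->|[->|->]] //; case: y.
Qed.

Theorem mainTheorem14 :
  (forall (X Y : topologicalType) (f : X -> Y) (hf : continuous f),
      iota_rllrr (mkMor hf) <-> generic_section f) /\
  (forall (X Y : topologicalType) (f : X -> Y) (hf : continuous f),
      iota_rllrr (mkMor hf) ->
      [/\ has_section f, quotient_map f & fibres_have_generic_point f]) /\
  [/\ iota_rllrr sigma, iota_rllrr e & iota_rllrr M] /\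
  (forall g : Mor, iota_rllrr g -> iota_rrrrl g).
Proof.
split.
  move=> X Y f hf; split; [exact: L4_generic|exact: gen_L4].
split.
  move=> X Y f hf /L4_generic [s [cs [fs gen]]]; split.
  - by exists s.
  - split; first by move=> y; exists (s y).
    move=> V; split; first exact: ((continuousP f).1 hf).
    move=> oV.
    have -> : V = s @^-1` (f @^-1` V).
      by apply/seteqP; split => y; rewrite /preimage /= fs.
    exact: ((continuousP s).1 cs).
  - move=> y; exists (s y); split => //.
    by move=> U oU /gen; apply.
split.
  split; [exact: (gen_L4 gen_sigma)|exact: (gen_L4 gen_e)|exact: (gen_L4 gen_M)].
exact: L4_rrrrl.
Qed.
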